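(* Let $P$ be a finite $(3+1)$-free poset and let $v(P)=\{v(a):a\in P\}$ be its poset of views. Then there is a listing $(S_1,S_2,\dots,S_k)$ of the co-connected components of $v(P)$ such that for every $x\in S_i$ and every $y\in S_{i+1}$ we have $x<y$ in $v(P)$. Moreover, the preimages $v^{-1}(S_i)$, $i=1,\dots,k$, are exactly the tops of tangles, the bottoms of tangles, and the clone sets of $P$.
   Context: A poset $P$ is $(3+1)$-free if there are no $a,b,c,d\in P$ with $a<b<c$ and $d$ incomparable to each of $a,b,c$. For $a\in P$ let $D_a=\{x\in P:x<a\}$, $U_a=\{x\in P:x>a\}$. The view of $a$ is $v(a)=(D_a,P\setminus U_a)$, and the set $v(P)$ of views is partially ordered by $v(a)\le v(b)$ iff $D_a\subseteq D_b$ and $U_a\supseteq U_b$. A co-connected component of a poset is a connected component of its incomparability graph. Write $a\mathrel{\top}b$ if neither of $D_a,D_b$ contains the other, $a\mathrel{\bot}b$ if neither of $U_a,U_b$ contains the other, and $a\approx b$ if $D_a=D_b$ and $U_a=U_b$. A top of a tangle is a subset $A\subseteq P$ with $|A|\ge2$ that is a connected component of the graph on $P$ with edges $\{a,b\}$ for $a\mathrel{\top}b$; a bottom of a tangle is defined in the same way using $\bot$. A top $A$ and bottom $B$ are matched if there are distinct $a_1,a_2\in A$, $b_1,b_2\in B$ with $b_1<a_1$, $b_2<a_2$ and the pairs $\{a_1,a_2\},\{b_1,b_2\},\{b_1,a_2\},\{b_2,a_1\}$ incomparable; in a $(3+1)$-free poset this is a perfect matching between tops and bottoms of tangles, and a tangle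 is a matched pair $(A,B)$. A clone set of $P$ is an equivalence class of $\approx$ restricted to the vertices of $P$ not lying in any top or bottom of a tangle. *)

(* Defs.v *)
From mathcomp Require Import all_boot all_order.
Set Implicit Arguments. Unset Strict Implicit. Unset Printing Implicit Defensive.
Import Order.Theory.
Local Open Scope order_scope.

Section PosetDefs.
Context {disp : Order.disp_t} {T : finPOrderType disp}.

Definition incomp (x y : T) : bool := ~~ (x >=< y).

Definition free31 : Prop :=
  ~ exists a b c d : T,
      [/\ a < b, b < c, incomp d a, incomp d b & incomp d c].

Definition Dset (a : T) : {set T} := [set x | x < a].
Definition Uset (a : T) : {set T} := [set x | a < x].

Definition view (a : T) : {set T} * {set T} := (Dset a, ~: Uset a).

Definition views : {set {set T} * {set T}} := [set view a | a : T].

(* order on views: (D,P\U) <= (D',P\U') iff D ⊆ D' and U ⊇ U' *)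
Definition vle (x y : {set T} * {set T}) : bool :=
  (x.1 \subset y.1) && (~: y.2 \subset ~: x.2).
Definition vlt (x y : {set T} * {set T}) : bool := (x != y) && vle x y.

Definition vinc_edge (x y : {set T} * {set T}) : bool :=
  [&& x \in views, y \in views, ~~ vle x y & ~~ vle y x].

Definition cocomponents : {set {set {set T} * {set T}}} :=
  [set [set y | connect vinc_edge x y] | x in views].

Definition topr (a b : T) : bool :=
  ~~ (Dset a \subset Dset b) && ~~ (Dset b \subset Dset a).
Definition botr (a b : T) : bool :=
  ~~ (Uset a \subset Uset b) && ~~ (Uset b \subset Uset a).
Definition approx (a b : T) : bool := (Dset a == Dset b) && (Uset a == Uset b).

Definition tops : {set {set T}} :=
  [set C in [set [set y | connect topr a y] | a : T] | 1 < #|C|].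
Definition bottoms : {set {set T}} :=
  [set C in [set [set y | connect botr a y] | a : T] | 1 < #|C|].

Definition untangled (a : T) : bool :=
  [forall A in tops, a \notin A] && [forall B in bottoms, a \notin B].

Definition clone_sets : {set {set T}} :=
  [set [set b | untangled b & approx a b] | a in [pred a | untangled a]].

Definition vpreim (S : {set {set T} * {set T}}) : {set T} :=
  [set a | view a \in S].

End PosetDefs.

(* Main.v *)
Require Import Defs.
From mathcomp Require Import all_boot all_order.
Import Order.Theory.
Local Open Scope order_scope.
Set Implicit Arguments. Unset Strict Implicit.


Lemma conn_ind (U : finType) (e : rel U) (P : U -> Prop) x :
  P x -> (forall u v, connect e x u -> e u v -> P u -> P v) ->
  forall y, connect e x y -> P y.
Proof.
move=> Px st y /connectP [p pth ->]; elim/last_ind: p pth => [//|p z IH].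
rewrite rcons_path last_rcons => /andP [pth ez].
apply: (st (last x p)) => //; last exact: IH.
by apply/connectP; exists p.
Qed.

Lemma conn_noedge (U : finType) (e : rel U) x y :
  (forall z, ~~ e x z) -> connect e x y -> y = x.
Proof.
move=> h /connectP [[|z p] /= pth ->] //.
by case/andP: pth => exz; rewrite (negPf (h z)) in exz.
Qed.

Lemma conn_nb (U : finType) (e : rel U) x y :
  connect e x y -> x != y -> exists z, e x z.
Proof.
move=> /connectP [[|z p] /= pth ->]; first by rewrite eqxx.
by case/andP: pth => exz _ _; exists z.
Qed.

Lemma two_elems (U : finType) (X : {set U}) a : 1 < #|X| -> exists2 b, b \in X & b != a.
Proof.
move=> h; case: (pickP [pred b | (b \in X) && (b != a)]) => [b /andP[? ?]|h0]; first by exists b.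
exfalso; move: h; apply/negP; rewrite -leqNgt.
rewrite -(cards1 a); apply: subset_leq_card; apply/subsetP => u uX.
by have := h0 u; rewrite /= uX /= inE => /negbFE.
Qed.

Section P.
Context {disp : Order.disp_t} {T : finPOrderType disp}.
Hypothesis F : @free31 disp T.

Lemma incompI (x y : T) : x != y -> ~~ (x < y) -> ~~ (y < x) -> incomp x y.
Proof.
move=> nxy nlt ngt; rewrite /incomp; apply/negP => /orP [] ; rewrite le_eqVlt => /orP [].
- by rewrite (negPf nxy).
- by rewrite (negPf nlt).
- by rewrite eq_sym (negPf nxy).
- by rewrite (negPf ngt).
Qed.

Lemma comp_cases (x y : T) : ~~ incomp x y -> (x == y) || (x < y) || (y < x).
Proof.
rewrite /incomp negbK /Order.comparable !le_eqVlt.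
by case/orP => /orP [/eqP ->|->]; rewrite ?eqxx ?orbT.
Qed.

Lemma no31 (a b c d : T) : a < b -> b < c -> incomp d a -> incomp d b -> incomp d c -> False.
Proof. by move=> *; apply: F; exists a, b, c, d. Qed.

Lemma ltD (a b : T) : a < b -> Dset a \subset Dset b.
Proof. by move=> ab; apply/subsetP => x; rewrite !inE => /lt_trans; apply. Qed.
Lemma ltU (a b : T) : a < b -> Uset b \subset Uset a.
Proof. by move=> ab; apply/subsetP => x; rewrite !inE; apply: lt_trans. Qed.

Lemma topr_inc (a b : T) : topr a b -> incomp a b.
Proof.
case/andP => h1 h2; apply: incompI.
- by apply: contraNneq h1 => ->.
- by apply: contra h1; apply: ltD.
- by apply: contra h2; apply: ltD.
Qed.
Lemma botr_inc (a b : T) : botr a b -> incomp a b.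
Proof.
case/andP => h1 h2; apply: incompI.
- by apply: contraNneq h1 => ->.
- by apply: contra h2; apply: ltU.
- by apply: contra h1; apply: ltU.
Qed.

Lemma incompC (x y : T) : incomp x y = incomp y x.
Proof. by rewrite /incomp comparable_sym. Qed.

Lemma incompN (x y : T) : incomp x y -> ~~ (x < y) /\ ~~ (y < x) /\ x != y.
Proof.
move=> h; have := h; rewrite /incomp => /negP h'; split; [|split].
- by apply/negP => /ltW hl; apply: h'; rewrite /Order.comparable hl.
- by apply/negP => /ltW hl; apply: h'; rewrite /Order.comparable hl orbT.
- by apply/negP => /eqP e; apply: h'; rewrite e comparablexx.
Qed.

Lemma F1 (a b c : T) : topr a b -> botr a c -> False.
Proof.
move=> tab bac.
have iab := topr_inc tab; have iac := botr_inc bac.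
case/andP: tab => /subsetPn [x xa xb] /subsetPn [y yb ya].
case/andP: bac => /subsetPn [z za zc] /subsetPn [w wc wa].
move: xa xb yb ya za zc wc wa; rewrite !inE => xa xb yb ya za zc wc wa.
have [nab [nba eab]] := incompN iab.
have [nac [nca eac]] := incompN iac.
have icz : incomp c z.
  apply: incompI => //.
  - by apply: contraNneq nac => ->.
  - by apply/negP => zc'; move: nac; rewrite (lt_trans za zc').
have xc : x < c.
  have : ~~ incomp c x.
    apply/negP => icx; apply: (no31 xa za icx) => //; by rewrite incompC.
  move/comp_cases; case/orP => [/orP[/eqP cx|cx]|cx].
  - by move: nca; rewrite cx xa.
  - by move: nca; rewrite (lt_trans cx xa).
  - by [].
have ibx : incomp b x.
  apply: incompI.
  - by apply: contraNneq nba => ->.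
  - by apply/negP => bx; move: nba; rewrite (lt_trans bx xa).
  - by rewrite xb.
have bw : b < w.
  have [ibc|nibc] := boolP (incomp b c).
    have : ~~ incomp b w by apply/negP => ibw; apply: (no31 xc wc ibx ibc ibw).
    move/comp_cases; case/orP => [/orP[/eqP bw|//]|wb].
    - by move: xb; rewrite bw (lt_trans xc wc).
    - by move: xb; rewrite (lt_trans xc (lt_trans wc wb)).
  move/comp_cases: nibc; case/orP => [/orP[/eqP bc|bc]|cb].
  - by move: xb; rewrite bc xc.
  - exact: lt_trans bc wc.
  - by move: xb; rewrite (lt_trans xc cb).
have iay : incomp a y.
  apply: incompI.
  - by apply: contraNneq nab => ->.
  - by apply/negP => ay; move: nab; rewrite (lt_trans ay yb).
  - by rewrite ya.
have iaw : incomp a w.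
  apply: incompI.
  - by apply: contraNneq nba => ->.
  - by rewrite wa.
  - by apply/negP => wa'; move: nba; rewrite (lt_trans bw wa').
exact: (no31 yb bw iay iab iaw).
Qed.

Lemma nocross (a b : T) : Dset a \subset Dset b -> Uset a \subset Uset b ->
  ~~ (Dset b \subset Dset a) -> ~~ (Uset b \subset Uset a) -> False.
Proof.
move=> dab uab /subsetPn [x xb xa] /subsetPn [y yb ya].
move: xb xa yb ya; rewrite !inE => xb xa yb ya.
have nab : ~~ (a < b) by apply/negP => ab; move: ya; rewrite (lt_trans ab yb).
have nba : ~~ (b < a) by apply/negP => ba; move: xa; rewrite (lt_trans xb ba).
have eab : a != b by apply/eqP => e; move: xa; rewrite e xb.
have iab : incomp a b by exact: incompI.
have iax : incomp a x.
  apply: incompI.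
  - by apply: contraNneq nab => ->.
  - by apply/negP => ax; move: nab; rewrite (lt_trans ax xb).
  - by rewrite xa.
have iay : incomp a y.
  apply: incompI.
  - by apply: contraNneq nba => ->.
  - by rewrite ya.
  - by apply/negP => ya'; move: nba; rewrite (lt_trans yb ya').
exact: (no31 xb yb iax iab iay).
Qed.
End P.

Section P2.
Context {disp : Order.disp_t} {T : finPOrderType disp}.
Hypothesis F : @free31 disp T.

Lemma vle_view (a b : T) :
  vle (view a) (view b) = (Dset a \subset Dset b) && (Uset b \subset Uset a).
Proof. by rewrite /vle /view /= !setCK. Qed.

Lemma view_in (a : T) : view a \in views.
Proof. exact: imset_f. Qed.

Lemma viewsP (w : {set T} * {set T}) : w \in views -> exists a, w = view a.
Proof. by case/imsetP => a _ ->; exists a. Qed.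

Lemma view_eq (a b : T) : view a = view b -> Dset a = Dset b /\ Uset a = Uset b.
Proof. by case => -> /setC_inj ->. Qed.

Lemma toprC (a b : T) : topr a b = topr b a.
Proof. by rewrite /topr andbC. Qed.
Lemma botrC (a b : T) : botr a b = botr b a.
Proof. by rewrite /botr andbC. Qed.

Lemma vinc_view (a b : T) :
  vinc_edge (view a) (view b) = topr a b || botr a b.
Proof.
rewrite /vinc_edge !view_in /= !vle_view /topr /botr.
case: (boolP (Dset a \subset Dset b)) => dab; case: (boolP (Dset b \subset Dset a)) => dba;
case: (boolP (Uset a \subset Uset b)) => uab; case: (boolP (Uset b \subset Uset a)) => uba //=.
- by case: (nocross F dab uab dba uba).
- by case: (nocross F dba uba dab uab).
Qed.

Lemma vinc_views (x y : {set T} * {set T}) : vinc_edge x y -> y \in views.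
Proof. by case/and4P. Qed.

Definition tcomp (a : T) := [set y | connect topr a y].
Definition bcomp (a : T) := [set y | connect botr a y].
Definition vcomp (a : T) := [set w | connect vinc_edge (view a) w].

Lemma pre_top (a b : T) : topr a b -> vpreim (vcomp a) = tcomp a.
Proof.
move=> tab; apply/setP => x; rewrite /vpreim /vcomp /tcomp /bcomp !inE; apply/idP/idP.
- move=> cx.
  have : exists c, [/\ view x = view c, connect topr a c & exists d, topr c d].
    apply: (@conn_ind _ vinc_edge (fun w => exists c, [/\ w = view c, connect topr a c & exists d, topr c d]) (view a)) => //.
      by exists a; split => //; exists b.
    move=> u v _ uv [c [uc ac [d cd]]]; rewrite uc in uv.
    have [c' vc] := viewsP (vinc_views uv); rewrite vc in uv *.
    move: uv; rewrite vinc_view => /orP [tcc|bcc]; last by case: (F1 F cd bcc).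
    exists c'; split => //; last by exists c; rewrite toprC.
    exact: connect_trans ac (connect1 tcc).
  case=> c [/view_eq [Dx Ux] ac [d cd]].
  apply: connect_trans ac _; apply: connect_trans (connect1 cd) _.
  by apply: connect1; rewrite /topr Dx; rewrite toprC in cd.
- move=> ax; apply: (@conn_ind _ _ (fun y => connect vinc_edge (view a) (view y)) a _ _ x ax) => //.
  move=> u v _ uv au; apply: connect_trans au (connect1 _).
  by rewrite vinc_view uv.
Qed.

Lemma pre_bot (a b : T) : botr a b -> vpreim (vcomp a) = bcomp a.
Proof.
move=> tab; apply/setP => x; rewrite /vpreim /vcomp /tcomp /bcomp !inE; apply/idP/idP.
- move=> cx.
  have : exists c, [/\ view x = view c, connect botr a c & exists d, botr c d].
    apply: (@conn_ind _ vinc_edge (fun w => exists c, [/\ w = view c, connect botr a c & exists d, botr c d]) (view a)) => //.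
      by exists a; split => //; exists b.
    move=> u v _ uv [c [uc ac [d cd]]]; rewrite uc in uv.
    have [c' vc] := viewsP (vinc_views uv); rewrite vc in uv *.
    move: uv; rewrite vinc_view => /orP [tcc|bcc]; first by case: (F1 F tcc cd).
    exists c'; split => //; last by exists c; rewrite botrC.
    exact: connect_trans ac (connect1 bcc).
  case=> c [/view_eq [Dx Ux] ac [d cd]].
  apply: connect_trans ac _; apply: connect_trans (connect1 cd) _.
  by apply: connect1; rewrite /botr Ux; rewrite botrC in cd.
- move=> ax; apply: (@conn_ind _ _ (fun y => connect vinc_edge (view a) (view y)) a _ _ x ax) => //.
  move=> u v _ uv au; apply: connect_trans au (connect1 _).
  by rewrite vinc_view uv orbT.
Qed.

Lemma topr_irr (a : T) : topr a a = false.
Proof. by rewrite /topr subxx. Qed.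
Lemma botr_irr (a : T) : botr a a = false.
Proof. by rewrite /botr subxx. Qed.

Lemma tops_mem (a : T) : (exists A, A \in tops /\ a \in A) <-> exists b, topr a b.
Proof.
split.
- case=> A []; rewrite inE => /andP [/imsetP [c _ ->] cardA].
  rewrite inE => ca.
  have [b bA ba] := two_elems a cardA.
  move: bA; rewrite inE => cb.
  have sym := sym_connect_sym (@toprC).
  have ab : connect topr a b by apply: connect_trans cb; rewrite sym.
  by apply: (conn_nb ab); rewrite eq_sym.
- case=> b ab; exists (tcomp a); split; last by rewrite inE connect0.
  rewrite inE imset_f // /=.
  apply: (@leq_ltn_trans #|[set a]|); first by rewrite cards1.
  apply: proper_card; apply/properP; split.
    by apply/subsetP => u; rewrite !inE => /eqP ->; apply: connect0.
  exists b; first by rewrite inE connect1.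
  by rewrite inE; apply/eqP => e; rewrite e topr_irr in ab.
Qed.

Lemma bots_mem (a : T) : (exists A, A \in bottoms /\ a \in A) <-> exists b, botr a b.
Proof.
split.
- case=> A []; rewrite inE => /andP [/imsetP [c _ ->] cardA].
  rewrite inE => ca.
  have [b bA ba] := two_elems a cardA.
  move: bA; rewrite inE => cb.
  have sym := sym_connect_sym (@botrC).
  have ab : connect botr a b by apply: connect_trans cb; rewrite sym.
  by apply: (conn_nb ab); rewrite eq_sym.
- case=> b ab; exists (bcomp a); split; last by rewrite inE connect0.
  rewrite inE imset_f // /=.
  apply: (@leq_ltn_trans #|[set a]|); first by rewrite cards1.
  apply: proper_card; apply/properP; split.
    by apply/subsetP => u; rewrite !inE => /eqP ->; apply: connect0.
  exists b; first by rewrite inE connect1.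
  by rewrite inE; apply/eqP => e; rewrite e botr_irr in ab.
Qed.

Lemma untangledP (a : T) :
  untangled a <-> (forall b, ~~ topr a b) /\ (forall b, ~~ botr a b).
Proof.
rewrite /untangled; split.
- case/andP => /forall_inP ht /forall_inP hb; split => b; apply/negP => h.
  + have [|A [AT aA]] := (proj2 (tops_mem a)); first by exists b.
    by move: (ht A AT); rewrite aA.
  + have [|A [AT aA]] := (proj2 (bots_mem a)); first by exists b.
    by move: (hb A AT); rewrite aA.
- case=> ht hb; apply/andP; split; apply/forall_inP => A AT; apply/negP => aA.
  + have [b] := (proj1 (tops_mem a)) (ex_intro _ A (conj AT aA)).
    by rewrite (negPf (ht b)).
  + have [b] := (proj1 (bots_mem a)) (ex_intro _ A (conj AT aA)).
    by rewrite (negPf (hb b)).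
Qed.

Lemma pre_un (a : T) : untangled a ->
  vpreim (vcomp a) = [set b | untangled b & approx a b].
Proof.
move=> ua; have [ht hb] := proj1 (untangledP a) ua; apply/setP => x; rewrite /vpreim /vcomp /tcomp /bcomp !inE; apply/idP/idP.
- move/conn_noedge => h.
  have [|Dx Ux] := view_eq (h _); first by move=> z; apply/negP => az;
    have [c ec] := viewsP (vinc_views az); move: az;
    rewrite ec vinc_view (negPf (ht c)) (negPf (hb c)).
  rewrite /approx Dx Ux !eqxx !andbT.
  apply/untangledP; split => b; [rewrite /topr Dx | rewrite /botr Ux];
   [exact: ht | exact: hb].
- case/andP => _ /andP [/eqP Dx /eqP Ux].
  by rewrite /view Dx Ux connect0.
Qed.
End P2.

Section P3.
Context {disp : Order.disp_t} {T : finPOrderType disp}.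
Hypothesis F : @free31 disp T.

Lemma tcomp_tops (a b : T) : topr a b -> tcomp a \in tops.
Proof.
move=> ab; rewrite inE imset_f // /=.
apply: (@leq_ltn_trans #|[set a]|); first by rewrite cards1.
apply: proper_card; apply/properP; split.
  by apply/subsetP => u; rewrite !inE => /eqP ->; apply: connect0.
exists b; first by rewrite inE connect1.
by rewrite inE; apply/eqP => e; rewrite e topr_irr in ab.
Qed.

Lemma bcomp_bots (a b : T) : botr a b -> bcomp a \in bottoms.
Proof.
move=> ab; rewrite inE imset_f // /=.
apply: (@leq_ltn_trans #|[set a]|); first by rewrite cards1.
apply: proper_card; apply/properP; split.
  by apply/subsetP => u; rewrite !inE => /eqP ->; apply: connect0.
exists b; first by rewrite inE connect1.
by rewrite inE; apply/eqP => e; rewrite e botr_irr in ab.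
Qed.

Lemma vinc_sym (x y : {set T} * {set T}) : vinc_edge x y = vinc_edge y x.
Proof. by rewrite /vinc_edge; case: (x \in views); case: (y \in views); case: (vle x y); case: (vle y x). Qed.

Lemma cocompP (S : {set {set T} * {set T}}) : S \in cocomponents -> exists a, S = vcomp a.
Proof. by case/imsetP => w /viewsP [a ->] ->; exists a. Qed.

Lemma comp_in (a : T) : vcomp a \in cocomponents.
Proof. by apply/imsetP; exists (view a) => //; apply: view_in. Qed.

Lemma comp_self (a : T) : view a \in vcomp a.
Proof. by rewrite inE connect0. Qed.

Lemma comp_views (a : T) w : w \in vcomp a -> w \in views.
Proof.
rewrite inE; apply: (@conn_ind _ vinc_edge (fun w => w \in views) (view a)).
  exact: view_in.
by move=> u v _ uv _; apply: vinc_views uv.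
Qed.

Lemma comp_eq (a b : T) w : w \in vcomp a -> w \in vcomp b -> vcomp a = vcomp b.
Proof.
have sym := sym_connect_sym vinc_sym.
rewrite !inE => aw bw; apply/setP => z; rewrite !inE.
have ab : connect vinc_edge (view a) (view b) by apply: connect_trans aw _; rewrite sym.
have ba : connect vinc_edge (view b) (view a) by rewrite sym.
apply/idP/idP; [exact: connect_trans ba | exact: connect_trans ab].
Qed.

Lemma comp_cmp (a b : T) x y : vcomp a != vcomp b -> x \in vcomp a -> y \in vcomp b ->
  vle x y || vle y x.
Proof.
move=> ne xA yB; apply/negPn/negP; rewrite negb_or => /andP [nxy nyx].
have e : vinc_edge x y by rewrite /vinc_edge (comp_views xA) (comp_views yB) nxy nyx.
have yA : y \in vcomp a by move: xA; rewrite !inE => xA; apply: connect_trans xA (connect1 e).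
by move: ne; rewrite (comp_eq yA yB) eqxx.
Qed.

Lemma vle_trans (x y z : {set T} * {set T}) : vle x y -> vle y z -> vle x z.
Proof.
case/andP => h1 h2 /andP [h3 h4]; apply/andP; split; first exact: subset_trans h1 h3.
exact: subset_trans h4 h2.
Qed.

Lemma spread (a b : T) : vcomp a != vcomp b -> vle (view a) (view b) ->
  forall x y, x \in vcomp a -> y \in vcomp b -> vle x y.
Proof.
move=> ne ab.
have h1 : forall x, x \in vcomp a -> vle x (view b).
  move=> x xA; move: (xA); rewrite inE; apply: (@conn_ind _ vinc_edge (fun x => vle x (view b)) (view a)) => // u v au uv uvb.
  have vA : v \in vcomp a by rewrite inE (connect_trans au (connect1 uv)).
  case/orP: (comp_cmp ne vA (comp_self b)) => // bv.
  by case/and4P: uv => _ _ /negP []; apply: vle_trans uvb bv.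
move=> x y xA; rewrite inE.
apply: (@conn_ind _ vinc_edge (fun y => vle x y) (view b) (h1 x xA)) => u v bu uv xu.
have vB : v \in vcomp b by rewrite inE (connect_trans bu (connect1 uv)).
case/orP: (comp_cmp ne xA vB) => // vx.
by case/and4P: uv => _ _ _ /negP []; apply: vle_trans vx xu.
Qed.

Definition rle (S S' : {set {set T} * {set T}}) : bool :=
  (S == S') || [forall x in S, forall y in S', vle x y].

Lemma rle_total : {in cocomponents &, total rle}.
Proof.
move=> S S' /cocompP [a ->] /cocompP [b ->]; rewrite /rle.
case: (boolP (vcomp a == vcomp b)) => [/eqP ->|ne]; first by rewrite eqxx.
rewrite eq_sym (negPf ne) /=.
have spr := fun a b ne ab => (@spread a b ne ab).
case/orP: (comp_cmp ne (comp_self a) (comp_self b)) => h.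
  by apply/orP; left; apply/forall_inP => x xA; apply/forall_inP => y yB; apply: spread h x y xA yB.
have ne' : vcomp b != vcomp a by rewrite eq_sym.
by apply/orP; right; apply/forall_inP => x xA; apply/forall_inP => y yB; apply: spread ne' h x y xA yB.
Qed.
End P3.
Unset Implicit Arguments.

Theorem proposition2p13 (disp : Order.disp_t) (T : finPOrderType disp) :
  @free31 disp T ->
  exists s : seq {set {set T} * {set T}},
    [/\ uniq s,
        (forall S, (S \in s) = (S \in @cocomponents disp T)),
        (forall i x y, (i.+1 < size s)%N ->
           x \in nth set0 s i -> y \in nth set0 s i.+1 -> vlt x y)
      & [set vpreim S | S in s] = tops :|: bottoms :|: @clone_sets disp T].
Proof.
move=> F.
set s := sort rle (enum (@cocomponents disp T)).
have memS : forall S, (S \in s) = (S \in @cocomponents disp T).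
  by move=> S; rewrite mem_sort mem_enum.
have us : uniq s by rewrite sort_uniq enum_uniq.
exists s; split => //.
- move=> i x y lt xi yi.
  have srt : sorted rle s.
    apply: sort_sorted_in; first exact: rle_total.
    by apply/allP => S; rewrite mem_enum.
  have := (sortedP set0 srt) i lt; rewrite /rle.
  have ltn' : (i < size s)%N by apply: ltnW.
  rewrite nth_uniq // eqn_leq ltnn andbF /=.
  move=> /forall_inP /(_ x xi) /forall_inP /(_ y yi) vxy.
  rewrite /vlt vxy andbT; apply/negP => /eqP exy.
  have := mem_nth set0 ltn'; have := mem_nth set0 lt; rewrite !memS.
  move=> /cocompP [b eb] /cocompP [a ea].
  have e : nth set0 s i = nth set0 s i.+1.
    by rewrite ea eb; apply: (@comp_eq _ _ _ _ x); [rewrite -ea | rewrite -eb exy].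
  by move: (nth_uniq set0 ltn' lt us); rewrite e eqxx eqn_leq ltnn andbF.
apply/setP => X; apply/imsetP/idP.
- case=> S; rewrite memS => /cocompP [a ->] ->.
  case: (pickP (topr a)) => [b ab|nt].
    by rewrite (pre_top F ab); apply/setUP; left; apply/setUP; left; exact: tcomp_tops ab.
  case: (pickP (botr a)) => [b ab|nb].
    by rewrite (pre_bot F ab); apply/setUP; left; apply/setUP; right; exact: bcomp_bots ab.
  have ua : untangled a by apply/untangledP; split => b; rewrite ?nt ?nb.
  by rewrite (pre_un F ua); apply/setUP; right; apply/imsetP; exists a.
- case/setUP => [/setUP [] |].
  + move=> XT; move: (XT); rewrite inE => /andP [/imsetP [c _ eX] cardX].
    have [b bX bc] := two_elems c cardX.
    move: bX; rewrite eX inE => cb.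
    have [d cd] : exists d, topr c d by apply: (conn_nb cb); rewrite eq_sym.
    exists (vcomp c); first by rewrite memS comp_in.
    by rewrite (pre_top F cd).
  + move=> XT; move: (XT); rewrite inE => /andP [/imsetP [c _ eX] cardX].
    have [b bX bc] := two_elems c cardX.
    move: bX; rewrite eX inE => cb.
    have [d cd] : exists d, botr c d by apply: (conn_nb cb); rewrite eq_sym.
    exists (vcomp c); first by rewrite memS comp_in.
    by rewrite (pre_bot F cd).
  + case/imsetP => a ua ->.
    exists (vcomp a); first by rewrite memS comp_in.
    by rewrite (pre_un F ua).
Qed.
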